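(* Let $x_0,\dots,x_q$ be complex numbers (repetitions allowed), $q\ge0$, $0\le j\le q$, and $\beta>0$. Then $$\int_0^{\beta/2}\tau\,e^{-\tau[x_j,\ldots,x_q]}\,e^{-(\beta-\tau)[x_0,\ldots,x_j]}\,\mathrm{d}\tau=\sum_{r=0}^{j}e^{-\frac{\beta}{2}[x_0,\ldots,x_r]}\sum_{m=j}^{q}e^{-\frac{\beta}{2}[x_r,\ldots,x_q,x_j,x_m]}.$$
   Context: For $t\in\mathbb{R}$ and numbers $y_0,\dots,y_p$ (repetitions allowed), $e^{t[y_0,\ldots,y_p]}$ denotes the divided difference of $f(x)=e^{tx}$, $f[y_0,\ldots,y_p]=\frac{1}{2\pi i}\oint_\Gamma\frac{f(x)}{\prod_{i=0}^p(x-y_i)}\,\mathrm{d}x$, $\Gamma$ a positively oriented contour enclosing all $y_i$. The multiset $[x_r,\ldots,x_q,x_j,x_m]$ consists of $x_r,\ldots,x_q$ together with one extra copy of $x_j$ and one extra copy of $x_m$. *)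

(* Defs.v *)
From Stdlib Require Import Reals List.
From Coquelicot Require Import Coquelicot.
Open Scope R_scope.

Definition cexp (z : C) : C :=
  (exp (Re z) * cos (Im z), exp (Re z) * sin (Im z)).

Definition cprod (l : list C) : C := fold_right Cmult (RtoC 1) l.

Definition cRInt (f : R -> C) (a b : R) : C :=
  @RInt C_R_CompleteNormedModule f a b.

(* Divided difference f[y_0,...,y_p] = (1/(2 pi i)) \oint_Gamma f(x)/prod(x-y_i) dx,
   with Gamma the positively oriented circle |x| = rho, rho = 1 + sum |y_i|,
   which encloses all y_i.  Parametrising x = rho e^{i th}, dx = i rho e^{i th} d th:
   f[ys] = (1/(2 pi)) \int_0^{2 pi} f(x(th)) * rho e^{i th} / prod (x(th) - y_i) d th. *)
Definition dd_radius (ys : list C) : R :=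
  1 + fold_right (fun y s => Cmod y + s) 0 ys.

Definition divdiff (f : C -> C) (ys : list C) : C :=
  let rho := dd_radius ys in
  Cmult (RtoC (/ (2 * PI)))
    (cRInt (fun th =>
       let x : C := Cmult (RtoC rho) (cexp (0, th)) in
       Cdiv (Cmult (f x) x) (cprod (map (fun y => Cminus x y) ys)))
     0 (2 * PI)).

(* e^{t[y_0,...,y_p]} : divided difference of x |-> e^{t x}. *)
Definition expdd (t : R) (ys : list C) : C :=
  divdiff (fun x => cexp (Cmult (RtoC t) x)) ys.

(* The multiset/list [x_a, ..., x_b] (empty if b < a). *)
Definition xs (x : nat -> C) (a b : nat) : list C := map x (seq a (S b - a)).

(* Main.v *)
Require Import Defs.
From Stdlib Require Import Reals List.
From Coquelicot Require Import Coquelicot.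
From Stdlib Require Import Lra Lia Permutation.
Open Scope R_scope.


Lemma dC_fst (f : R -> C) x (l : C) :
  is_derive f x l -> is_derive (fun t => fst (f t)) x (fst l).
Proof.
  intros H. unfold is_derive in *.
  apply (filterdiff_comp' f fst x _ fst H).
  apply filterdiff_linear. apply is_linear_fst.
Qed.

Lemma dC_snd (f : R -> C) x (l : C) :
  is_derive f x l -> is_derive (fun t => snd (f t)) x (snd l).
Proof.
  intros H. unfold is_derive in *.
  apply (filterdiff_comp' f snd x _ snd H).
  apply filterdiff_linear. apply is_linear_snd.
Qed.

Lemma dC_intro (f : R -> C) x (l : C) :
  is_derive (fun t => fst (f t)) x (fst l) -> is_derive (fun t => snd (f t)) x (snd l) -> is_derive f x l.
Proof.
  intros H1 H2. unfold is_derive in *.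
  assert (H := filterdiff_comp'_2 (K:=R_AbsRing) (fun t => fst (f t)) (fun t => snd (f t)) (fun u v => (u,v) : C) x _ _ (fun u v => (u,v)) H1 H2).
  simpl in H.
  eapply filterdiff_ext. 2: eapply filterdiff_ext_lin. 2: apply H.
  - intros t. simpl. destruct (f t); reflexivity.
  - apply filterdiff_linear. split.
    + intros [a b] [c d]; reflexivity.
    + intros k [a b]; reflexivity.
    + exists 1. split. lra. intros [a b]. rewrite Rmult_1_l. apply Rle_refl.
  - intros y. destruct l. reflexivity.
Qed.


Lemma deq (f : R -> R) (x : R) (l l' : R) : is_derive f x l -> l = l' -> is_derive f x l'.
Proof. intros H ->; exact H. Qed.
Lemma deqC (f : R -> C) (x : R) (l l' : C) : is_derive f x l -> l = l' -> is_derive f x l'.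
Proof. intros H ->; exact H. Qed.

Lemma dR_mult (u v : R -> R) (x : R) du dv : is_derive u x du -> is_derive v x dv ->
  is_derive (fun t => u t * v t) x (du * v x + u x * dv).
Proof. intros H1 H2. apply (is_derive_mult u v x du dv H1 H2). intros; apply Rmult_comm. Qed.
Lemma dR_plus (u v : R -> R) (x : R) du dv : is_derive u x du -> is_derive v x dv ->
  is_derive (fun t => u t + v t) x (du + dv).
Proof. intros H1 H2. apply (is_derive_plus u v x du dv H1 H2). Qed.
Lemma dR_minus (u v : R -> R) (x : R) du dv : is_derive u x du -> is_derive v x dv ->
  is_derive (fun t => u t - v t) x (du - dv).
Proof. intros H1 H2. apply (is_derive_minus u v x du dv H1 H2). Qed.
Lemma dR_sq (u : R -> R) (x : R) du : is_derive u x du -> is_derive (fun t => u t ^ 2) x (2 * u x * du).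
Proof. intros H. apply (is_derive_ext (V:=R_NormedModule) (fun t => u t * u t) (fun t => u t ^ 2)). intros; simpl; ring.
  apply (deq _ _ (du * u x + u x * du)). apply dR_mult; auto. ring. Qed.
Lemma dR_const (c : R) (x : R) : is_derive (fun _ => c) x 0.
Proof. apply (is_derive_const (K:=R_AbsRing) (V:=R_NormedModule)). Qed.

Lemma dC_RtoC (g : R -> R) (x : R) l : is_derive g x l -> is_derive (fun t => RtoC (g t)) x (RtoC l).
Proof. intros H. apply dC_intro; simpl. exact H. apply dR_const. Qed.

Lemma dC_const (c : C) (x : R) : is_derive (fun _ : R => c) x (0%C : C).
Proof. apply dC_intro; simpl; apply dR_const. Qed.

Lemma dC_plus (f g : R -> C) (x : R) df dg : is_derive f x df -> is_derive g x dg ->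
  is_derive (fun t => Cplus (f t) (g t)) x (Cplus df dg).
Proof. intros H1 H2. apply dC_intro; simpl.
  apply dR_plus; [apply (dC_fst _ _ _ H1)|apply (dC_fst _ _ _ H2)].
  apply dR_plus; [apply (dC_snd _ _ _ H1)|apply (dC_snd _ _ _ H2)]. Qed.

Lemma dC_minus (f g : R -> C) (x : R) df dg : is_derive f x df -> is_derive g x dg ->
  is_derive (fun t => Cminus (f t) (g t)) x (Cminus df dg).
Proof. intros H1 H2. apply dC_intro; simpl.
  apply dR_plus; [apply (dC_fst _ _ _ H1)|]. apply (is_derive_opp (fun t => fst (g t))). apply (dC_fst _ _ _ H2).
  apply dR_plus; [apply (dC_snd _ _ _ H1)|]. apply (is_derive_opp (fun t => snd (g t))). apply (dC_snd _ _ _ H2). Qed.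

Lemma dC_mult (f g : R -> C) (x : R) df dg : is_derive f x df -> is_derive g x dg ->
  is_derive (fun t => Cmult (f t) (g t)) x (Cplus (Cmult df (g x)) (Cmult (f x) dg)).
Proof. intros H1 H2.
  pose proof (dC_fst _ _ _ H1). pose proof (dC_snd _ _ _ H1).
  pose proof (dC_fst _ _ _ H2). pose proof (dC_snd _ _ _ H2).
  apply dC_intro; simpl.
  - eapply deq. apply dR_minus; apply dR_mult; eassumption. simpl; ring.
  - eapply deq. apply dR_plus; apply dR_mult; eassumption. simpl; ring.
Qed.

Lemma dC_inv (f : R -> C) (x : R) df : is_derive f x df -> f x <> 0%C ->
  is_derive (fun t => Cinv (f t)) x (Copp (Cdiv df (Cmult (f x) (f x)))).
Proof. intros H1 Hn.
  pose proof (dC_fst _ _ _ H1) as Ha. pose proof (dC_snd _ _ _ H1) as Hb.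
  assert (HD : is_derive (fun t => fst (f t) ^ 2 + snd (f t) ^ 2) x (2 * fst (f x) * fst df + 2 * snd (f x) * snd df)).
  { apply dR_plus; apply dR_sq; assumption. }
  assert (Hd : fst (f x) ^ 2 + snd (f x) ^ 2 <> 0).
  { intros E. apply Hn. destruct (f x) as [a b]; simpl in *.
    assert (a = 0) by nra. assert (b = 0) by nra. subst. reflexivity. }
  apply dC_intro.
  - eapply deq. apply dR_mult. exact Ha. apply is_derive_inv. exact HD. exact Hd.
    cbv beta. revert Hd. destruct (f x) as [a b]; destruct df as [c d]; simpl. intros Hd. field; repeat split; intro HH; apply Hd; nra.
  - eapply deq. apply dR_mult. apply (is_derive_opp (fun t => snd (f t))). exact Hb. apply is_derive_inv. exact HD. exact Hd.
    cbv beta. revert Hd. destruct (f x) as [a b]; destruct df as [c d]; simpl. intros Hd. unfold opp; simpl. field; repeat split; intro HH; apply Hd; nra.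
Qed.


Lemma dR_comp (F : R -> R) (g : R -> R) (x : R) dF dg :
  is_derive F (g x) dF -> is_derive g x dg -> is_derive (fun t => F (g t)) x (dF * dg).
Proof. intros H1 H2. eapply deq. apply (is_derive_comp F g x dF dg H1 H2). simpl. apply Rmult_comm. Qed.

Lemma dR_exp (y : R) : is_derive exp y (exp y).
Proof. auto_derive; auto; ring. Qed.
Lemma dR_cos (y : R) : is_derive cos y (- sin y).
Proof. auto_derive; auto; ring. Qed.
Lemma dR_sin (y : R) : is_derive sin y (cos y).
Proof. auto_derive; auto; ring. Qed.

Lemma dC_cexp (f : R -> C) (x : R) df : is_derive f x df ->
  is_derive (fun t => cexp (f t)) x (Cmult (cexp (f x)) df).
Proof. intros H.
  pose proof (dC_fst _ _ _ H) as Ha. pose proof (dC_snd _ _ _ H) as Hb.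
  unfold cexp. apply dC_intro; simpl.
  - eapply deq. apply dR_mult. apply dR_comp. apply dR_exp. exact Ha.
    apply dR_comp. apply dR_cos. exact Hb. simpl. ring.
  - eapply deq. apply dR_mult. apply dR_comp. apply dR_exp. exact Ha.
    apply dR_comp. apply dR_sin. exact Hb. simpl. ring.
Qed.

Lemma dC_id (x : R) : is_derive (fun t : R => RtoC t) x (RtoC 1).
Proof. apply dC_RtoC. auto_derive; auto; ring. Qed.

Lemma dC_cmul (c : C) (f : R -> C) (x : R) df : is_derive f x df ->
  is_derive (fun t => Cmult c (f t)) x (Cmult c df).
Proof. intros H. eapply deqC. apply dC_mult. apply dC_const. exact H.
  apply injective_projections; simpl; ring. Qed.


Lemma cexp_add (a b : C) : cexp (Cplus a b) = Cmult (cexp a) (cexp b).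
Proof. unfold cexp. destruct a as [a1 a2]; destruct b as [b1 b2]; simpl.
  rewrite exp_plus, cos_plus, sin_plus. apply injective_projections; simpl; ring. Qed.

Lemma cexp_0 : cexp (RtoC 0) = RtoC 1.
Proof. unfold cexp; simpl. rewrite exp_0, cos_0, sin_0. apply injective_projections; simpl; ring. Qed.

Lemma Cmod_cexp (w : C) : Cmod (cexp w) = exp (fst w).
Proof. destruct w as [a b]. unfold cexp, Cmod, Re, Im. cbn [fst snd].
  replace ((exp a * cos b) ^ 2 + (exp a * sin b) ^ 2) with ((exp a)^2).
  apply sqrt_pow2. apply Rlt_le, exp_pos.
  assert (Hs := sin2_cos2 b); unfold Rsqr in Hs.
  replace ((exp a * cos b) ^ 2 + (exp a * sin b) ^ 2) with (exp a ^ 2 * (sin b * sin b + cos b * cos b)) by ring.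
  rewrite Hs; ring. Qed.

Lemma Rabs_le_Cmod_fst (w : C) : Rabs (fst w) <= Cmod w.
Proof. unfold Cmod. rewrite <- sqrt_Rsqr_abs. apply sqrt_le_1_alt. unfold Rsqr. nra. Qed.
Lemma Rabs_le_Cmod_snd (w : C) : Rabs (snd w) <= Cmod w.
Proof. unfold Cmod. rewrite <- sqrt_Rsqr_abs. apply sqrt_le_1_alt. unfold Rsqr. nra. Qed.
Lemma Cmod_le_sum (w : C) : Cmod w <= Rabs (fst w) + Rabs (snd w).
Proof. destruct w as [a b]. unfold Cmod. cbn [fst snd].
  pose proof (Rabs_pos a); pose proof (Rabs_pos b).
  rewrite <- (sqrt_pow2 (Rabs a + Rabs b)) by lra. apply sqrt_le_1_alt.
  rewrite <- (pow2_abs a), <- (pow2_abs b). nra. Qed.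

Lemma sin_abs_le (b : R) : Rabs (sin b) <= Rabs b.
Proof. assert (H := bounded_variation sin cos 1 0 b). rewrite sin_0 in H.
  rewrite !Rminus_0_r, Rmult_1_l in H. apply H. intros t _. split. apply dR_sin.
  apply Rabs_le. apply COS_bound. Qed.

Lemma cos_diff_le (b : R) : Rabs (cos b - 1) <= b ^ 2.
Proof. assert (H := bounded_variation cos (fun t => - sin t) (Rabs b) 0 b). rewrite cos_0 in H.
  rewrite !Rminus_0_r in H. replace (b^2) with (Rabs b * Rabs b). apply H.
  intros t Ht. split. apply dR_cos. rewrite Rabs_Ropp. rewrite Rminus_0_r in Ht.
  eapply Rle_trans. apply sin_abs_le. exact Ht.
  rewrite <- Rabs_mult. rewrite Rabs_pos_eq. ring. nra. Qed.

Lemma sin_diff_le (b : R) : Rabs (sin b - b) <= Rabs b ^ 3.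
Proof. assert (H := bounded_variation (fun t => sin t - t) (fun t => cos t - 1) (Rabs b ^ 2) 0 b).
  cbv beta in H. rewrite sin_0 in H.
  replace (Rabs b ^ 3) with (Rabs b ^ 2 * Rabs b) by ring.
  replace (sin b - b) with (sin b - b - (0 - 0)) by ring. replace (Rabs b) with (Rabs (b - 0)) at 2 by (f_equal; ring).
  apply H.
  intros t Ht. split. eapply deq. apply dR_minus. apply dR_sin. auto_derive; auto. ring.
  eapply Rle_trans. apply cos_diff_le. rewrite Rminus_0_r in Ht.
  rewrite <- (pow2_abs t). apply pow_incr. split; auto. apply Rabs_pos. rewrite Rminus_0_r in Ht; exact Ht. Qed.

Lemma exp_small (a : R) : Rabs a <= 1/2 -> Rabs (exp a - 1 - a) <= 2 * a ^ 2 /\ Rabs (exp a - 1) <= 2 * Rabs a.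
Proof. intros Ha. apply Rabs_le_between in Ha.
  pose proof (exp_ineq1_le a) as H1. pose proof (exp_ineq1_le (-a)) as H2.
  assert (He : exp a * exp (-a) = 1) by (rewrite <- exp_plus; replace (a + -a) with 0 by ring; apply exp_0).
  pose proof (exp_pos a). pose proof (exp_pos (-a)).
  assert (Hu : exp a * (1 - a) <= 1) by nra.
  split.
  - rewrite Rabs_pos_eq by lra. nra.
  - destruct (Rle_dec 0 a).
    + rewrite Rabs_pos_eq by lra. rewrite (Rabs_pos_eq a) by lra. nra.
    + rewrite Rabs_left1 by nra. rewrite (Rabs_left1 a) by lra. nra.
Qed.

Lemma cexp_bound (w : C) : Cmod w <= 1/2 -> Cmod (Cminus (Cminus (cexp w) (RtoC 1)) w) <= 8 * Cmod w ^ 2.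
Proof. intros Hw. pose proof (Rabs_le_Cmod_fst w) as Ha. pose proof (Rabs_le_Cmod_snd w) as Hb.
  destruct w as [a b]. cbn [fst snd] in *. set (r := Cmod (a,b)) in *.
  assert (Har : Rabs a <= 1/2) by lra. destruct (exp_small a Har) as [E1 E2].
  pose proof (cos_diff_le b) as C1. pose proof (sin_diff_le b) as S1. pose proof (sin_abs_le b) as S2.
  pose proof (COS_bound b) as C2. pose proof (Rabs_pos a). pose proof (Rabs_pos b).
  eapply Rle_trans. apply Cmod_le_sum. unfold cexp, Cminus, Cplus, Copp, Re, Im. cbn [fst snd].
  assert (Hre : exp a * cos b + Ropp 1 + - a = (exp a - 1 - a) * cos b + (1 + a) * (cos b - 1)) by ring.
  assert (Him : exp a * sin b + Ropp 0 + - b = (exp a - 1) * sin b + (sin b - b)) by ring.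
  change (fst (RtoC 1)) with 1. change (snd (RtoC 1)) with 0. rewrite Hre, Him.
  assert (A1 : Rabs ((exp a - 1 - a) * cos b) <= 2 * r^2).
  { rewrite Rabs_mult. assert (Rabs (cos b) <= 1) by (apply Rabs_le; lra).
    assert (a^2 <= r^2) by (rewrite <- (pow2_abs a); apply pow_incr; lra).
    pose proof (Rabs_pos (cos b)). pose proof (Rabs_pos (exp a - 1 - a)). nra. }
  assert (A2 : Rabs ((1 + a) * (cos b - 1)) <= 2 * r^2).
  { rewrite Rabs_mult. assert (Rabs (1 + a) <= 2) by (apply Rabs_le; apply Rabs_le_between in Har; lra).
    assert (b^2 <= r^2) by (rewrite <- (pow2_abs b); apply pow_incr; lra).
    pose proof (Rabs_pos (1 + a)). pose proof (Rabs_pos (cos b - 1)). nra. }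
  assert (A3 : Rabs ((exp a - 1) * sin b) <= 2 * r^2).
  { rewrite Rabs_mult. pose proof (Rabs_pos (sin b)). pose proof (Rabs_pos (exp a - 1)). nra. }
  assert (A4 : Rabs (sin b - b) <= r^2).
  { eapply Rle_trans. exact S1. assert (Rabs b ^ 3 <= r ^ 3) by (apply pow_incr; lra). assert (0 <= r) by lra. nra. }
  pose proof (Rabs_triang ((exp a - 1 - a) * cos b) ((1 + a) * (cos b - 1))).
  pose proof (Rabs_triang ((exp a - 1) * sin b) (sin b - b)). pose proof (pow2_ge_0 r). lra.
Qed.


Definition CDer (f : R -> C) := forall t : R, exists l : C, is_derive f t l.

Lemma CDer_cont (f : R -> C) : CDer f -> forall t, @continuous R_UniformSpace C_UniformSpace f t.
Proof. intros H t. destruct (H t) as [l Hl]. apply (ex_derive_continuous (V:=C_R_NormedModule)). exists l. exact Hl. Qed.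

Lemma CDer_exRInt (f : R -> C) a b : CDer f -> @ex_RInt C_R_NormedModule f a b.
Proof. intros H. apply (ex_RInt_continuous (V:=C_R_CompleteNormedModule)). intros z _. apply CDer_cont, H. Qed.

Lemma cRInt_ext (f g : R -> C) a b : (forall t, f t = g t) -> cRInt f a b = cRInt g a b.
Proof. intros H. unfold cRInt. apply (RInt_ext (V:=C_R_CompleteNormedModule)). intros; apply H. Qed.

Lemma cRInt_plus (f g : R -> C) a b : @ex_RInt C_R_NormedModule f a b -> @ex_RInt C_R_NormedModule g a b ->
  cRInt (fun t => Cplus (f t) (g t)) a b = Cplus (cRInt f a b) (cRInt g a b).
Proof. intros H1 H2. unfold cRInt. exact (RInt_plus (V:=C_R_CompleteNormedModule) f g a b H1 H2). Qed.

Lemma cRInt_minus (f g : R -> C) a b : @ex_RInt C_R_NormedModule f a b -> @ex_RInt C_R_NormedModule g a b ->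
  cRInt (fun t => Cminus (f t) (g t)) a b = Cminus (cRInt f a b) (cRInt g a b).
Proof. intros H1 H2. unfold cRInt. exact (RInt_minus (V:=C_R_CompleteNormedModule) f g a b H1 H2). Qed.

Lemma is_cRInt_cmul (f : R -> C) a b (l c : C) : @is_RInt C_R_NormedModule f a b l ->
  @is_RInt C_R_NormedModule (fun t => Cmult c (f t)) a b (Cmult c l).
Proof. intros H.
  pose proof (is_RInt_fct_extend_fst (U:=R_NormedModule) (V:=R_NormedModule) f a b l H) as H1.
  pose proof (is_RInt_fct_extend_snd (U:=R_NormedModule) (V:=R_NormedModule) f a b l H) as H2.
  apply (is_RInt_ext (V:=C_R_NormedModule) (fun t => (fst c * fst (f t) - snd c * snd (f t), fst c * snd (f t) + snd c * fst (f t)))).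
  { intros t _. destruct c; destruct (f t); reflexivity. }
  replace (Cmult c l) with ((fst c * fst l - snd c * snd l, fst c * snd l + snd c * fst l) : C)
    by (destruct c; destruct l; reflexivity).
  apply (is_RInt_fct_extend_pair (U:=R_NormedModule) (V:=R_NormedModule)); simpl.
  - apply (is_RInt_minus (V:=R_NormedModule)); apply (is_RInt_scal (V:=R_NormedModule)); assumption.
  - apply (is_RInt_plus (V:=R_NormedModule)); apply (is_RInt_scal (V:=R_NormedModule)); assumption.
Qed.

Lemma cRInt_cmul (f : R -> C) a b (c : C) : @ex_RInt C_R_NormedModule f a b ->
  cRInt (fun t => Cmult c (f t)) a b = Cmult c (cRInt f a b).
Proof. intros H. unfold cRInt. apply (is_RInt_unique (V:=C_R_CompleteNormedModule)). apply is_cRInt_cmul. apply (RInt_correct (V:=C_R_CompleteNormedModule)). exact H. Qed.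

Lemma cRInt_bound (f : R -> C) b M : 0 <= b -> @ex_RInt C_R_NormedModule f 0 b ->
  (forall t, 0 <= t <= b -> Cmod (f t) <= M) -> Cmod (cRInt f 0 b) <= b * M.
Proof. intros Hb Hf HM. rewrite Cmod_norm. unfold cRInt.
  assert (H := norm_RInt_le (V:=C_R_NormedModule) f (fun _ => M) 0 b (@RInt C_R_CompleteNormedModule f 0 b) (scal (b - 0) M) Hb).
  replace (b * M) with (scal (b - 0) M) by (rewrite Rminus_0_r; reflexivity).
  apply H.
  - intros x Hx. rewrite <- Cmod_norm. apply HM; auto.
  - apply (RInt_correct (V:=C_R_CompleteNormedModule)). exact Hf.
  - apply (is_RInt_const (V:=R_NormedModule)).
Qed.


Lemma CDer_const (c : C) : CDer (fun _ => c).
Proof. intros t. eexists. apply dC_const. Qed.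
Lemma CDer_plus f g : CDer f -> CDer g -> CDer (fun t => Cplus (f t) (g t)).
Proof. intros H1 H2 t. destruct (H1 t), (H2 t). eexists. apply dC_plus; eauto. Qed.
Lemma CDer_minus f g : CDer f -> CDer g -> CDer (fun t => Cminus (f t) (g t)).
Proof. intros H1 H2 t. destruct (H1 t), (H2 t). eexists. apply dC_minus; eauto. Qed.
Lemma CDer_mult f g : CDer f -> CDer g -> CDer (fun t => Cmult (f t) (g t)).
Proof. intros H1 H2 t. destruct (H1 t), (H2 t). eexists. apply dC_mult; eauto. Qed.
Lemma CDer_inv f : CDer f -> (forall t, f t <> 0%C) -> CDer (fun t => Cinv (f t)).
Proof. intros H1 Hn t. destruct (H1 t). eexists. apply dC_inv; eauto. Qed.
Lemma CDer_div f g : CDer f -> CDer g -> (forall t, g t <> 0%C) -> CDer (fun t => Cdiv (f t) (g t)).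
Proof. intros H1 H2 Hn. unfold Cdiv. apply CDer_mult; auto. apply CDer_inv; auto. Qed.
Lemma CDer_cexp f : CDer f -> CDer (fun t => cexp (f t)).
Proof. intros H1 t. destruct (H1 t). eexists. apply dC_cexp; eauto. Qed.
Lemma CDer_RtoC_id : CDer (fun t => RtoC t).
Proof. intros t. eexists. apply dC_id. Qed.
Lemma CDer_pow f n : CDer f -> CDer (fun t => Cpow (f t) n).
Proof. intros H. induction n; simpl. apply CDer_const. apply CDer_mult; auto. Qed.
Lemma CDer_ext f g : (forall t, f t = g t) -> CDer f -> CDer g.
Proof. intros E H t. destruct (H t) as [l Hl]. exists l. apply (is_derive_ext (V:=C_R_NormedModule) f g); auto. Qed.
Lemma CDer_cis : CDer (fun t => cexp (0, t)).
Proof. apply CDer_cexp. intros t. exists (0, 1). apply dC_intro; simpl.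
  apply dR_const. auto_derive; auto. Qed.

Definition zz (rho th : R) : C := Cmult (RtoC rho) (cexp (0, th)).
Definition PP (S : list C) (z : C) : C := cprod (map (fun y => Cminus z y) S).

Lemma CDer_zz rho : CDer (zz rho).
Proof. unfold zz. apply CDer_mult. apply CDer_const. apply CDer_cis. Qed.

Lemma CDer_PP S f : CDer f -> CDer (fun t => PP S (f t)).
Proof. intros H. induction S; unfold PP; simpl. apply CDer_const.
  apply CDer_mult; auto. apply CDer_minus; auto. apply CDer_const. Qed.

Lemma Cmod_zz rho th : 0 <= rho -> Cmod (zz rho th) = rho.
Proof. intros H. unfold zz. rewrite Cmod_mult, Cmod_cexp, Cmod_R. simpl. rewrite exp_0, Rabs_pos_eq; lra. Qed.

Definition valid (rho : R) (S : list C) := 0 < rho /\ List.Forall (fun y => Cmod y < rho) S.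

Definition plow (S : list C) (rho : R) : R := fold_right (fun y p => (rho - Cmod y) * p) 1 S.

Lemma plow_pos S rho : valid rho S -> 0 < plow S rho.
Proof. intros [H0 H]. induction H; simpl. lra. apply Rmult_lt_0_compat; auto. lra. Qed.

Lemma Cmod_minus_ge (z y : C) : Cmod z - Cmod y <= Cmod (Cminus z y).
Proof. pose proof (Cmod_triangle (Cminus z y) y). replace (Cplus (Cminus z y) y) with z in H.
  lra. apply injective_projections; simpl; ring. Qed.

Lemma PP_low S rho z : valid rho S -> Cmod z = rho -> plow S rho <= Cmod (PP S z).
Proof. intros [H0 H] Hz. induction H; unfold PP; simpl. rewrite Cmod_1. lra.
  rewrite Cmod_mult. apply Rmult_le_compat. lra. apply Rlt_le. apply plow_pos. split; auto.
  rewrite <- Hz. apply Cmod_minus_ge. apply IHForall. Qed.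

Lemma PP_nz S rho z : valid rho S -> Cmod z = rho -> PP S z <> 0%C.
Proof. intros Hv Hz E. pose proof (PP_low S rho z Hv Hz). pose proof (plow_pos S rho Hv).
  rewrite E, Cmod_0 in H. lra. Qed.

Lemma valid_cons rho y S : valid rho (y :: S) -> valid rho S.
Proof. intros [H0 H]. inversion H. split; auto. Qed.

Lemma zz_nz rho th : 0 < rho -> zz rho th <> 0%C.
Proof. intros H E. assert (Cmod (zz rho th) = rho) by (apply Cmod_zz; lra). rewrite E, Cmod_0 in H0. lra. Qed.


Lemma C_minus_eq (a b : C) : minus a b = Cminus a b.
Proof. reflexivity. Qed.

Lemma exp_le_mono a b : a <= b -> exp a <= exp b.
Proof. intros [H|H]. apply Rlt_le, exp_increasing; auto. subst; lra. Qed.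

Lemma Cmod_cexp_le (t : R) (w : C) rho : Cmod w <= rho -> Cmod (cexp (Cmult (RtoC t) w)) <= exp (Rabs t * rho).
Proof. intros Hw. rewrite Cmod_cexp. apply exp_le_mono. simpl. rewrite Rmult_0_l, Rminus_0_r.
  pose proof (Rabs_le_Cmod_fst w). pose proof (Rabs_pos t).
  apply Rle_trans with (Rabs (t * fst w)). apply Rle_abs. rewrite Rabs_mult. apply Rmult_le_compat_l; lra. Qed.

Lemma deriv_param (h w : R -> C) (L H rho t0 : R) :
  0 <= L -> 0 <= rho -> CDer h -> CDer w -> (forall th, Cmod (h th) <= H) -> (forall th, Cmod (w th) <= rho) ->
  is_derive (fun t : R => cRInt (fun th => Cmult (h th) (cexp (Cmult (RtoC t) (w th)))) 0 L) t0
            (cRInt (fun th => Cmult (Cmult (h th) (w th)) (cexp (Cmult (RtoC t0) (w th)))) 0 L).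
Proof.
  intros HL Hr Dh Dw Hh Hw.
  assert (H0 : 0 <= H) by (eapply Rle_trans; [apply Cmod_ge_0|apply (Hh 0)]).
  set (F := fun t : R => cRInt (fun th => Cmult (h th) (cexp (Cmult (RtoC t) (w th)))) 0 L).
  set (l := cRInt (fun th => Cmult (Cmult (h th) (w th)) (cexp (Cmult (RtoC t0) (w th)))) 0 L).
  split. apply is_linear_scal_l.
  intros x Hx. apply (is_filter_lim_locally_unique (K:=R_AbsRing) (V:=R_NormedModule)) in Hx. subst x.
  intros eps.
  set (K := L * (H * exp (Rabs t0 * rho) * (8 * rho ^ 2))).
  assert (HK : 0 <= K).
  { unfold K. apply Rmult_le_pos; auto. apply Rmult_le_pos. apply Rmult_le_pos; auto. apply Rlt_le, exp_pos.
    pose proof (pow2_ge_0 rho). lra. }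
  assert (Hd : 0 < Rmin (1/(2*rho+1)) (eps/(K+1))).
  { apply Rmin_pos. apply Rdiv_lt_0_compat; lra. apply Rdiv_lt_0_compat. apply cond_pos. lra. }
  exists (mkposreal _ Hd). intros y Hy.
  change (Rabs (y - t0) < Rmin (1/(2*rho+1)) (eps/(K+1))) in Hy.
  set (u := y - t0) in *.
  assert (Hu1 : Rabs u <= 1/(2*rho+1)) by (pose proof (Rmin_l (1/(2*rho+1)) (eps/(K+1))); lra).
  assert (Hu2 : Rabs u <= eps/(K+1)) by (pose proof (Rmin_r (1/(2*rho+1)) (eps/(K+1))); lra).
  change (norm (minus y t0)) with (Rabs u).
  assert (Eq : minus (minus (F y) (F t0)) (scal (minus y t0) l) =
     cRInt (fun th => Cmult (Cmult (h th) (cexp (Cmult (RtoC t0) (w th))))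
        (Cminus (Cminus (cexp (Cmult (RtoC u) (w th))) (RtoC 1)) (Cmult (RtoC u) (w th)))) 0 L).
  { assert (E1 : scal (minus y t0) l = Cmult (RtoC u) l) by (rewrite scal_R_Cmult; reflexivity).
    rewrite E1, !C_minus_eq. unfold F, l.
    assert (I1 : forall t, @ex_RInt C_R_NormedModule (fun th => Cmult (h th) (cexp (Cmult (RtoC t) (w th)))) 0 L).
    { intros t. apply CDer_exRInt. apply CDer_mult; auto. apply CDer_cexp. apply CDer_mult; auto. apply CDer_const. }
    assert (I2 : @ex_RInt C_R_NormedModule (fun th => Cmult (Cmult (h th) (w th)) (cexp (Cmult (RtoC t0) (w th)))) 0 L).
    { apply CDer_exRInt. apply CDer_mult; auto. apply CDer_mult; auto. apply CDer_cexp. apply CDer_mult; auto. apply CDer_const. }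
    rewrite <- cRInt_cmul by exact I2. rewrite <- cRInt_minus by auto.
    rewrite <- cRInt_minus. 2: apply (ex_RInt_minus (V:=C_R_NormedModule)); auto.
    2: { apply CDer_exRInt. apply CDer_mult. apply CDer_const. apply CDer_mult; auto. apply CDer_mult; auto. apply CDer_cexp. apply CDer_mult; auto. apply CDer_const. }
    apply cRInt_ext. intros th.
    assert (Ey : Cmult (RtoC y) (w th) = Cplus (Cmult (RtoC t0) (w th)) (Cmult (RtoC u) (w th))).
    { unfold u. apply injective_projections; simpl; ring. }
    rewrite Ey, cexp_add. apply injective_projections; simpl; ring. }
  eapply Rle_trans; [apply Req_le; apply (f_equal norm); exact Eq|]. rewrite <- Cmod_norm.
  assert (Hwu : forall th, Cmod (Cmult (RtoC u) (w th)) <= Rabs u * rho).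
  { intros th. rewrite Cmod_mult, Cmod_R. apply Rmult_le_compat_l. apply Rabs_pos. auto. }
  assert (Hur : Rabs u * rho <= 1/2).
  { pose proof (Rabs_pos u). apply Rle_trans with (1/(2*rho+1) * rho). apply Rmult_le_compat_r; auto.
    apply Rmult_le_reg_r with (2*rho+1). lra. field_simplify; lra. }
  eapply Rle_trans. apply (cRInt_bound _ L (H * exp (Rabs t0 * rho) * (8 * (Rabs u * rho) ^ 2))); auto.
  { apply CDer_exRInt. apply CDer_mult. apply CDer_mult; auto. apply CDer_cexp. apply CDer_mult; auto. apply CDer_const.
    apply CDer_minus. apply CDer_minus. apply CDer_cexp. apply CDer_mult; auto. apply CDer_const. apply CDer_const.
    apply CDer_mult; auto. apply CDer_const. }
  { intros th _. rewrite !Cmod_mult. apply Rmult_le_compat. apply Rmult_le_pos; apply Cmod_ge_0. apply Cmod_ge_0.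
    apply Rmult_le_compat; try apply Cmod_ge_0; auto. apply Cmod_cexp_le; auto.
    eapply Rle_trans. apply cexp_bound. eapply Rle_trans. apply Hwu. auto.
    apply Rmult_le_compat_l. lra. apply pow_incr. split. apply Cmod_ge_0. auto. }
  assert (E3 : L * (H * exp (Rabs t0 * rho) * (8 * (Rabs u * rho) ^ 2)) = K * (Rabs u * Rabs u)).
  { unfold K. ring. }
  rewrite E3. pose proof (Rabs_pos u).
  assert (K * Rabs u <= eps).
  { apply Rle_trans with (K * (eps / (K+1))). apply Rmult_le_compat_l; auto.
    assert (0 < eps) by apply cond_pos.
    apply Rmult_le_reg_r with (K+1). lra. field_simplify; nra. }
  nra.
Qed.


Definition tI (L : list C) (rho : R) (k : nat) (t th : R) : C :=
  let z := zz rho th in Cdiv (Cmult (Cmult (Cpow z k) (cexp (Cmult (RtoC t) z))) z) (PP L z).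
Definition G (L : list C) (rho : R) (k : nat) (t : R) : C :=
  Cmult (RtoC (/ (2 * PI))) (cRInt (tI L rho k t) 0 (2 * PI)).

Lemma PI2_pos : 0 < 2 * PI.
Proof. pose proof PI_RGT_0. lra. Qed.

Lemma Cmod_div' (a b : C) : b <> 0%C -> Cmod (Cdiv a b) = Cmod a / Cmod b.
Proof. intros H. apply Cmod_div. exact H. Qed.

Lemma G_deriv L rho k t : valid rho L -> is_derive (G L rho k) t (G L rho (S k) t).
Proof. intros Hv. assert (Hr : 0 < rho) by (destruct Hv; auto).
  set (h := fun th => Cdiv (Cmult (Cpow (zz rho th) k) (zz rho th)) (PP L (zz rho th))).
  assert (Dh : CDer h).
  { unfold h. apply CDer_div. apply CDer_mult. apply CDer_pow, CDer_zz. apply CDer_zz.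
    apply CDer_PP, CDer_zz. intros th. apply (PP_nz L rho); auto. apply Cmod_zz; lra. }
  assert (Hh : forall th, Cmod (h th) <= rho ^ (S k) / plow L rho).
  { intros th. unfold h. assert (Hz : Cmod (zz rho th) = rho) by (apply Cmod_zz; lra).
    rewrite Cmod_div'. 2: apply (PP_nz L rho); auto.
    rewrite Cmod_mult, Cmod_pow, Hz. simpl.
    pose proof (PP_low L rho _ Hv Hz). pose proof (plow_pos L rho Hv).
    rewrite (Rmult_comm (rho ^ k) rho).
    unfold Rdiv. apply Rmult_le_compat_l. apply Rmult_le_pos. lra. apply pow_le; lra.
    apply Rinv_le_contravar; auto. }
  assert (Hw : forall th, Cmod (zz rho th) <= rho) by (intros; rewrite Cmod_zz; lra).
  pose proof (deriv_param h (zz rho) (2 * PI) _ rho t (Rlt_le _ _ PI2_pos) (Rlt_le _ _ Hr) Dh (CDer_zz rho) Hh Hw) as D.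
  unfold G. eapply deqC. apply dC_cmul.
  apply (is_derive_ext (V:=C_R_NormedModule) (fun t0 => cRInt (fun th => Cmult (h th) (cexp (Cmult (RtoC t0) (zz rho th)))) 0 (2 * PI))).
  { intros t0. apply cRInt_ext. intros th. unfold h, tI. cbv zeta.
    assert (PP L (zz rho th) <> 0%C) by (apply (PP_nz L rho); auto; apply Cmod_zz; lra).
    field. auto. }
  exact D.
  f_equal. apply cRInt_ext. intros th. unfold h, tI. cbv zeta. simpl.
  assert (PP L (zz rho th) <> 0%C) by (apply (PP_nz L rho); auto; apply Cmod_zz; lra).
  field. auto.
Qed.

Lemma tI_CDer L rho k t : valid rho L -> CDer (tI L rho k t).
Proof. intros Hv. assert (Hr : 0 < rho) by (destruct Hv; auto). unfold tI.
  apply CDer_div. apply CDer_mult. apply CDer_mult. apply CDer_pow, CDer_zz.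
  apply CDer_cexp. apply CDer_mult. apply CDer_const. apply CDer_zz. apply CDer_zz.
  apply CDer_PP, CDer_zz. intros th. apply (PP_nz L rho); auto. apply Cmod_zz; lra. Qed.

Lemma G_rec y L rho k t : valid rho (y :: L) ->
  Cminus (G (y :: L) rho (S k) t) (Cmult y (G (y :: L) rho k t)) = G L rho k t.
Proof. intros Hv. assert (Hr : 0 < rho) by (destruct Hv; auto).
  pose proof (valid_cons _ _ _ Hv) as Hv'.
  unfold G.
  transitivity (Cmult (RtoC (/ (2 * PI))) (Cminus (cRInt (tI (y :: L) rho (S k) t) 0 (2 * PI)) (Cmult y (cRInt (tI (y :: L) rho k t) 0 (2 * PI))))).
  { apply injective_projections; simpl; ring. }
  f_equal. rewrite <- cRInt_cmul by (apply CDer_exRInt, tI_CDer; auto).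
  rewrite <- cRInt_minus.
  2: apply CDer_exRInt, tI_CDer; auto.
  2: { apply CDer_exRInt. apply CDer_mult. apply CDer_const. apply tI_CDer; auto. }
  apply cRInt_ext. intros th. unfold tI. cbv zeta. unfold PP. simpl. fold (PP L (zz rho th)).
  assert (PP L (zz rho th) <> 0%C) by (apply (PP_nz L rho); auto; apply Cmod_zz; lra).
  assert (Cminus (zz rho th) y <> 0%C).
  { intros E. pose proof (PP_nz (y :: L) rho (zz rho th) Hv (Cmod_zz rho th (Rlt_le _ _ Hr))).
    apply H0. unfold PP. simpl. rewrite E. apply Cmult_0_l. }
  field. auto.
Qed.


Lemma cis_pow th n : Cpow (cexp (0, th)) n = cexp (0, INR n * th).
Proof. induction n. simpl. rewrite Rmult_0_l. unfold cexp; simpl. rewrite exp_0, cos_0, sin_0.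
  apply injective_projections; simpl; ring.
  simpl Cpow. rewrite IHn. rewrite <- cexp_add. f_equal. rewrite S_INR.
  apply injective_projections; simpl; ring. Qed.

Lemma zz_pow rho th n : Cpow (zz rho th) n = Cmult (RtoC (rho ^ n)) (cexp (0, INR n * th)).
Proof. unfold zz. rewrite Cpow_mult_l, cis_pow, RtoC_pow. reflexivity. Qed.

Lemma is_cRInt_eq (f : R -> C) a b (l l' : C) : @is_RInt C_R_NormedModule f a b l -> l = l' -> @is_RInt C_R_NormedModule f a b l'.
Proof. intros H <-; exact H. Qed.

Lemma int_cis (m : R) : m <> 0 -> sin (m * (2 * PI)) = 0 -> cos (m * (2 * PI)) = 1 ->
  cRInt (fun th => cexp (0, m * th)) 0 (2 * PI) = 0%C.
Proof. intros Hm Hs Hc. unfold cRInt.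
  apply (is_RInt_unique (V:=C_R_CompleteNormedModule)).
  set (F := fun th : R => ((sin (m * th) / m, - cos (m * th) / m) : C)).
  apply (is_cRInt_eq _ _ _ (minus (F (2 * PI)) (F 0))).
  2: { unfold F. rewrite Hs, Hc, Rmult_0_r, sin_0, cos_0. apply injective_projections; simpl; field; auto. }
  apply (is_RInt_derive (V:=C_R_CompleteNormedModule)).
  - intros x _. unfold F. apply dC_intro; simpl; unfold cexp; simpl; rewrite exp_0.
    + auto_derive; auto. field. auto.
    + auto_derive; auto. field. auto.
  - intros x _. apply CDer_cont. apply CDer_cexp. intros t. exists (0, m). apply dC_intro; simpl.
    apply dR_const. auto_derive; auto. ring.
Qed.

Lemma sin_INR_2PI n : sin (INR n * (2 * PI)) = 0.
Proof. replace (INR n * (2 * PI)) with (0 + 2 * INR n * PI) by ring. rewrite sin_period. apply sin_0. Qed.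
Lemma cos_INR_2PI n : cos (INR n * (2 * PI)) = 1.
Proof. replace (INR n * (2 * PI)) with (0 + 2 * INR n * PI) by ring. rewrite cos_period. apply cos_0. Qed.

Definition nI (L : list C) (rho : R) (a b : nat) (th : R) : C :=
  let z := zz rho th in Cdiv (Cpow z a) (Cmult (Cpow z b) (PP L z)).
Definition NN (L : list C) (rho : R) (a b : nat) : C :=
  Cmult (RtoC (/ (2 * PI))) (cRInt (nI L rho a b) 0 (2 * PI)).

Lemma nI_CDer L rho a b : valid rho L -> CDer (nI L rho a b).
Proof. intros Hv. assert (Hr : 0 < rho) by (destruct Hv; auto). unfold nI.
  apply CDer_div. apply CDer_pow, CDer_zz. apply CDer_mult. apply CDer_pow, CDer_zz.
  apply CDer_PP, CDer_zz. intros th. apply Cmult_neq_0. apply Cpow_nz. apply zz_nz; auto.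
  apply (PP_nz L rho); auto. apply Cmod_zz; lra. Qed.

Lemma cRInt_const (c : C) a b : cRInt (fun _ => c) a b = Cmult (RtoC (b - a)) c.
Proof. unfold cRInt. rewrite (RInt_const (V:=C_R_CompleteNormedModule)). apply scal_R_Cmult. Qed.

Lemma NN_nil rho a b : 0 < rho -> (a <= b)%nat -> NN nil rho a b = if Nat.eqb a b then RtoC 1 else RtoC 0.
Proof. intros Hr Hab. unfold NN.
  assert (E : forall th, nI nil rho a b th = Cmult (RtoC (rho ^ a / rho ^ b)) (cexp (0, (INR a - INR b) * th))).
  { intros th. unfold nI. cbv zeta. rewrite !zz_pow. unfold PP. simpl.
    assert (cexp (0, INR a * th) = Cmult (cexp (0, INR b * th)) (cexp (0, (INR a - INR b) * th))).
    { rewrite <- cexp_add. f_equal. apply injective_projections; simpl; ring. }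
    rewrite H. assert (cexp (0, INR b * th) <> 0%C).
    { intros E. pose proof (Cmod_cexp (0, INR b * th)). rewrite E, Cmod_0 in H0. simpl in H0.
      rewrite exp_0 in H0. lra. }
    assert (0 < rho ^ b) by (apply pow_lt; auto).
    rewrite RtoC_div by lra. field. split; auto. intros E'. apply RtoC_inj in E'. lra. }
  rewrite (cRInt_ext _ _ _ _ E). rewrite cRInt_cmul.
  2: { apply CDer_exRInt. apply CDer_cexp. intros t. exists (0, INR a - INR b). apply dC_intro; simpl.
       apply dR_const. auto_derive; auto. ring. }
  destruct (Nat.eqb_spec a b).
  - subst. rewrite (cRInt_ext _ (fun _ => RtoC 1)). rewrite cRInt_const.
    apply injective_projections; simpl; field; split; try (pose proof PI_RGT_0; lra); apply pow_nonzero; lra.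
    intros th. rewrite Rminus_diag, Rmult_0_l. unfold cexp; simpl. rewrite exp_0, cos_0, sin_0.
    apply injective_projections; simpl; ring.
  - rewrite int_cis. apply injective_projections; simpl; ring.
    + apply Rminus_eq_contra. intros E'. apply INR_eq in E'. auto.
    + replace (INR a - INR b) with (- INR (b - a)) by (rewrite minus_INR by auto; ring).
      rewrite Ropp_mult_distr_l_reverse, sin_neg, sin_INR_2PI. ring.
    + replace (INR a - INR b) with (- INR (b - a)) by (rewrite minus_INR by auto; ring).
      rewrite Ropp_mult_distr_l_reverse, cos_neg, cos_INR_2PI. ring.
Qed.

Lemma NN_rec y L rho a b : valid rho (y :: L) ->
  NN (y :: L) rho a b = Cplus (NN L rho a (S b)) (Cmult y (NN (y :: L) rho a (S b))).
Proof. intros Hv. assert (Hr : 0 < rho) by (destruct Hv; auto).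
  pose proof (valid_cons _ _ _ Hv) as Hv'.
  unfold NN.
  transitivity (Cmult (RtoC (/ (2 * PI))) (Cplus (cRInt (nI L rho a (S b)) 0 (2 * PI)) (Cmult y (cRInt (nI (y :: L) rho a (S b)) 0 (2 * PI))))).
  2: { apply injective_projections; simpl; ring. }
  f_equal. rewrite <- cRInt_cmul by (apply CDer_exRInt, nI_CDer; auto).
  rewrite <- cRInt_plus.
  2: apply CDer_exRInt, nI_CDer; auto.
  2: { apply CDer_exRInt. apply CDer_mult. apply CDer_const. apply nI_CDer; auto. }
  apply cRInt_ext. intros th. unfold nI. cbv zeta. unfold PP. simpl. fold (PP L (zz rho th)).
  assert (PP L (zz rho th) <> 0%C) by (apply (PP_nz L rho); auto; apply Cmod_zz; lra).
  assert (Cminus (zz rho th) y <> 0%C).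
  { intros E. pose proof (PP_nz (y :: L) rho (zz rho th) Hv (Cmod_zz rho th (Rlt_le _ _ Hr))).
    apply H0. unfold PP. simpl. rewrite E. apply Cmult_0_l. }
  assert (Cpow (zz rho th) b <> 0%C) by (apply Cpow_nz, zz_nz; auto).
  assert (zz rho th <> 0%C) by (apply zz_nz; auto).
  field. auto.
Qed.

Lemma NN_bound L rho a b : valid rho L -> Cmod (NN L rho a b) <= rho ^ a / (rho ^ b * plow L rho).
Proof. intros Hv. assert (Hr : 0 < rho) by (destruct Hv; auto). unfold NN.
  pose proof (plow_pos L rho Hv). pose proof PI2_pos.
  assert (0 < rho ^ b) by (apply pow_lt; auto).
  rewrite Cmod_mult, Cmod_R, Rabs_pos_eq by (apply Rlt_le, Rinv_0_lt_compat; auto).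
  apply Rmult_le_reg_l with (2 * PI). auto. rewrite <- Rmult_assoc, Rinv_r, Rmult_1_l by lra.
  apply cRInt_bound. lra. apply CDer_exRInt, nI_CDer; auto.
  intros th _. unfold nI. cbv zeta. assert (Hz : Cmod (zz rho th) = rho) by (apply Cmod_zz; lra).
  rewrite Cmod_div'. rewrite Cmod_mult, !Cmod_pow, Hz.
  pose proof (PP_low L rho _ Hv Hz).
  unfold Rdiv. apply Rmult_le_compat_l. apply pow_le; lra.
  apply Rinv_le_contravar. apply Rmult_lt_0_compat; auto. apply Rmult_le_compat_l; lra.
  apply Cmult_neq_0. apply Cpow_nz, zz_nz; auto. apply (PP_nz L rho); auto.
Qed.

Definition dl (a c : nat) : C := if Nat.eqb a c then RtoC 1 else RtoC 0.

Lemma small_zero (d C0 q : R) : 0 <= q < 1 -> (forall K, (1 <= K)%nat -> d <= C0 * q ^ K) -> d <= 0.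
Proof. intros Hq H. destruct (Rle_dec d 0) as [|Hd]; auto. exfalso.
  apply Rnot_le_lt in Hd.
  destruct (Rle_dec C0 0) as [HC|HC].
  { specialize (H 1%nat (le_n 1)). assert (C0 * q ^ 1 <= 0). simpl. nra. lra. }
  apply Rnot_le_lt in HC.
  destruct (pow_lt_1_zero q) with (y := d / C0) as [N HN].
  { rewrite Rabs_pos_eq; lra. }
  { apply Rdiv_lt_0_compat; auto. }
  specialize (HN (S N) (le_S _ _ (le_n N))). specialize (H (S N) ltac:(lia)).
  rewrite Rabs_pos_eq in HN by (apply pow_le; lra).
  apply (Rmult_lt_compat_l C0) in HN; auto. field_simplify in HN; lra.
Qed.

Lemma NN_main L : forall rho, valid rho L -> forall a b, (a <= b + length L)%nat -> NN L rho a b = dl a (b + length L).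
Proof. induction L as [|y L IH]; intros rho Hv a b Hab.
  - simpl. rewrite Nat.add_0_r. apply NN_nil. destruct Hv; auto. simpl in Hab; lia.
  - assert (Hr : 0 < rho) by (destruct Hv; auto). pose proof (valid_cons _ _ _ Hv) as Hv'.
    simpl length in *. set (n := length L) in *.
    set (D := fun b' => Cminus (NN (y :: L) rho a b') (dl a (b' + S n))).
    assert (Step : forall b', (a <= b' + S n)%nat -> D b' = Cmult y (D (S b'))).
    { intros b' Hb'. unfold D. rewrite NN_rec by auto. rewrite (IH rho Hv' a (S b')) by lia.
      unfold dl. replace (S b' + n)%nat with (b' + S n)%nat by lia.
      destruct (Nat.eqb a (S b' + S n)) eqn:E. apply Nat.eqb_eq in E; lia.
      apply injective_projections; simpl; ring. }
    assert (Iter : forall K b', (a <= b' + S n)%nat -> D b' = Cmult (Cpow y K) (D (b' + K)%nat)).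
    { induction K; intros b' Hb'. simpl. rewrite Nat.add_0_r. apply injective_projections; simpl; ring.
      rewrite Step by auto. rewrite (IHK (S b')) by lia. replace (S b' + K)%nat with (b' + S K)%nat by lia.
      simpl. apply injective_projections; simpl; ring. }
    assert (HD : D b = 0%C).
    { apply Cmod_eq_0. apply Rle_antisym. 2: apply Cmod_ge_0.
      destruct Hv as [_ Hf]. inversion Hf as [|? ? Hy _]; subst.
      apply (small_zero _ (rho ^ a / (rho ^ b * plow (y :: L) rho)) (Cmod y / rho)).
      { split. apply Rmult_le_pos. apply Cmod_ge_0. apply Rlt_le, Rinv_0_lt_compat; auto.
        apply Rmult_lt_reg_r with rho; auto. unfold Rdiv. rewrite Rmult_assoc, Rinv_l; lra. }
      intros K HK. rewrite (Iter K b Hab). rewrite Cmod_mult, Cmod_pow.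
      unfold D. unfold dl. destruct (Nat.eqb a (b + K + S n)) eqn:E. apply Nat.eqb_eq in E; lia.
      replace (Cminus (NN (y :: L) rho a (b + K)) (RtoC 0)) with (NN (y :: L) rho a (b + K))
        by (apply injective_projections; simpl; ring).
      eapply Rle_trans. apply Rmult_le_compat_l. apply pow_le, Cmod_ge_0. apply NN_bound; auto. split; auto.
      pose proof (plow_pos (y :: L) rho (conj Hr Hf)).
      rewrite pow_add. unfold Rdiv. rewrite Rpow_mult_distr, pow_inv.
      assert (0 < rho ^ b) by (apply pow_lt; auto). assert (0 < rho ^ K) by (apply pow_lt; auto).
      apply Req_le. field. repeat split; lra. }
    unfold D in HD. 
    transitivity (Cplus (Cminus (NN (y :: L) rho a b) (dl a (b + S n))) (dl a (b + S n))).
    apply injective_projections; simpl; ring. rewrite HD. apply injective_projections; simpl; ring.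
Qed.


Lemma G_at0 L rho k : valid rho L -> G L rho k 0 = NN L rho (S k) 0.
Proof. intros Hv. assert (Hr : 0 < rho) by (destruct Hv; auto). unfold G, NN. f_equal.
  apply cRInt_ext. intros th. unfold tI, nI. cbv zeta.
  replace (Cmult (RtoC 0) (zz rho th)) with (RtoC 0) by (apply injective_projections; simpl; ring).
  rewrite cexp_0. simpl Cpow. 
  assert (PP L (zz rho th) <> 0%C) by (apply (PP_nz L rho); auto; apply Cmod_zz; lra).
  field. auto. Qed.

Lemma G_nil rho t : 0 < rho -> G nil rho 0 t = 0%C.
Proof. intros Hr. unfold G.
  assert (Hz : cRInt (tI nil rho 0 t) 0 (2 * PI) = 0%C).
  2: { rewrite Hz. apply injective_projections; simpl; ring. }
  unfold cRInt. apply (is_RInt_unique (V:=C_R_CompleteNormedModule)).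
  destruct (Req_dec t 0) as [Ht|Ht].
  - subst t. apply (is_RInt_ext (V:=C_R_NormedModule) (fun th => Cmult (RtoC rho) (cexp (0, 1 * th)))).
    { intros th _. unfold tI, zz, PP. simpl.
      replace (Cmult (RtoC 0) (Cmult (RtoC rho) (cexp (0, th)))) with (RtoC 0) by (apply injective_projections; simpl; ring).
      rewrite cexp_0, Rmult_1_l. field. }
    apply (is_cRInt_eq _ _ _ (Cmult (RtoC rho) (cRInt (fun th => cexp (0, 1 * th)) 0 (2 * PI)))).
    apply is_cRInt_cmul. apply (RInt_correct (V:=C_R_CompleteNormedModule)).
    apply CDer_exRInt. apply CDer_cexp. intros x. exists (0, 1). apply dC_intro; simpl. apply dR_const. auto_derive; auto. ring.
    rewrite int_cis. apply injective_projections; simpl; ring. lra.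
    rewrite Rmult_1_l; apply sin_2PI. rewrite Rmult_1_l; apply cos_2PI.
  - set (F := fun th => Cmult (cexp (Cmult (RtoC t) (zz rho th))) (Cinv (Cmult Ci (RtoC t)))).
    assert (Hc : Cmult Ci (RtoC t) <> 0%C).
    { intros E. apply Ht. apply (f_equal snd) in E. simpl in E. lra. }
    apply (is_cRInt_eq _ _ _ (minus (F (2 * PI)) (F 0))).
    2: { unfold F, zz. replace (cexp (0, 2 * PI)) with (cexp (0, 0)).
         apply injective_projections; simpl; ring.
         unfold cexp. simpl. rewrite cos_2PI, sin_2PI, cos_0, sin_0. reflexivity. }
    apply (is_RInt_derive (V:=C_R_CompleteNormedModule)).
    + intros x _. unfold F. eapply deqC. apply dC_mult. apply dC_cexp. apply dC_cmul. unfold zz.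
      apply dC_cmul. apply dC_cexp. instantiate (1 := (0, 1)). apply dC_intro; simpl. apply dR_const. auto_derive; auto.
      apply dC_const.
      unfold tI, PP, zz. simpl. change ((0, 1) : C) with Ci. pose proof Ci_nz. field. split; auto. intros E; apply Ht; apply RtoC_inj; exact E.
    + intros x _. apply CDer_cont. apply tI_CDer. split; auto.
Qed.


Lemma zero_deriv (f : R -> R) : (forall t, is_derive f t 0) -> forall x, f x = f 0.
Proof. intros H x. assert (Hb := bounded_variation f (fun _ => 0) 0 0 x).
  assert (Rabs (f x - f 0) <= 0 * Rabs (x - 0)). apply Hb. intros t _. split. auto. rewrite Rabs_R0; lra.
  rewrite Rmult_0_l in H0. pose proof (Rabs_pos (f x - f 0)). assert (Rabs (f x - f 0) = 0) by lra.
  apply Rabs_eq_0 in H2. lra. Qed.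

Lemma first_order (u : R -> C) (y : C) : (forall t, is_derive u t (Cmult y (u t))) -> u 0 = 0%C -> forall t, u t = 0%C.
Proof. intros Hd H0 t.
  set (w := fun s => Cmult (cexp (Cmult (RtoC s) (Copp y))) (u s)).
  assert (Dw : forall s, is_derive w s (RtoC 0)).
  { intros s. unfold w. eapply deqC. apply dC_mult. apply dC_cexp.
    eapply deqC. apply dC_mult. apply dC_id. apply dC_const. reflexivity. apply Hd.
    apply injective_projections; simpl; ring. }
  assert (W1 : forall s, fst (w s) = fst (w 0)).
  { apply zero_deriv. intros s. apply (dC_fst _ _ _ (Dw s)). }
  assert (W2 : forall s, snd (w s) = snd (w 0)).
  { apply zero_deriv. intros s. apply (dC_snd _ _ _ (Dw s)). }
  assert (Hw0 : w 0 = 0%C). { unfold w. rewrite H0. apply Cmult_0_r. }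
  assert (Hwt : w t = 0%C). { apply injective_projections. rewrite W1, Hw0; auto. rewrite W2, Hw0; auto. }
  assert (E : u t = Cmult (cexp (Cmult (RtoC t) y)) (w t)).
  { unfold w. rewrite Cmult_assoc, <- cexp_add.
    replace (Cplus (Cmult (RtoC t) y) (Cmult (RtoC t) (Copp y))) with (RtoC 0) by (apply injective_projections; simpl; ring).
    rewrite cexp_0, Cmult_1_l. reflexivity. }
  rewrite E, Hwt. apply Cmult_0_r.
Qed.

Definition tower (g : nat -> R -> C) := forall k t, is_derive (g k) t (g (S k) t).

Fixpoint app (L : list C) (g : nat -> R -> C) : nat -> R -> C :=
  match L with
  | nil => g
  | y :: L' => fun k t => Cminus (app L' g (S k) t) (Cmult y (app L' g k t))
  end.

Lemma app_tower L (g : nat -> R -> C) : tower g -> tower (app L g).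
Proof. intros H. induction L as [|y L IH]; simpl; auto.
  intros k t. apply dC_minus. apply IH. apply dC_cmul. apply IH. Qed.

Lemma app_zero0 L (g : nat -> R -> C) n : (forall k, (k < n)%nat -> g k 0 = 0%C) -> forall k, (k + length L < n)%nat -> app L g k 0 = 0%C.
Proof. intros H. induction L as [|y L IH]; intros k Hk; simpl in *.
  apply H; lia. rewrite (IH (S k)) by lia. rewrite (IH k) by lia. apply injective_projections; simpl; ring. Qed.

Lemma uniq L : forall (g : nat -> R -> C), tower g -> (forall t, app L g 0 t = 0%C) -> (forall k, (k < length L)%nat -> g k 0 = 0%C) ->
  forall t, g 0%nat t = 0%C.
Proof. induction L as [|y L IH]; intros g Tg Ha Hi t.
  - apply Ha.
  - apply IH; [exact Tg| |intros k Hk; apply Hi; simpl; lia].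
    apply first_order with (y := y).
    + intros s. pose proof (app_tower L g Tg 0%nat s) as D. 
      assert (E : app L g 1 s = Cmult y (app L g 0 s)).
      { specialize (Ha s). simpl in Ha.
        transitivity (Cplus (Cminus (app L g 1 s) (Cmult y (app L g 0 s))) (Cmult y (app L g 0 s))).
        apply injective_projections; simpl; ring. rewrite Ha. apply injective_projections; simpl; ring. }
      rewrite <- E. exact D.
    + apply (app_zero0 L g (length (y :: L))). auto. simpl; lia.
Qed.


Lemma G_tower L rho : valid rho L -> tower (G L rho).
Proof. intros Hv k t. apply G_deriv; auto. Qed.

Lemma PP_perm L1 L2 z : Permutation L1 L2 -> PP L1 z = PP L2 z.
Proof. intros H. unfold PP. induction H; simpl; auto.
  - rewrite IHPermutation; auto.
  - rewrite !Cmult_assoc. rewrite (Cmult_comm (Cminus z y)). reflexivity.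
  - congruence. Qed.

Lemma valid_perm rho L1 L2 : Permutation L1 L2 -> valid rho L1 -> valid rho L2.
Proof. intros HP [H0 H]. split; auto. rewrite Forall_forall in *. intros x Hx.
  apply H. apply Permutation_in with L2; auto. apply Permutation_sym; auto. Qed.

Lemma G_perm L1 L2 rho k t : Permutation L1 L2 -> G L1 rho k t = G L2 rho k t.
Proof. intros HP. unfold G. f_equal. apply cRInt_ext. intros th. unfold tI. rewrite (PP_perm L1 L2); auto. Qed.

Lemma app_minus L (g1 g2 : nat -> R -> C) k t :
  app L (fun k t => Cminus (g1 k t) (g2 k t)) k t = Cminus (app L g1 k t) (app L g2 k t).
Proof. revert k. induction L as [|y L IH]; intros k; simpl; auto.
  rewrite !IH. apply injective_projections; simpl; ring. Qed.

Lemma app_ext L (g1 g2 : nat -> R -> C) : (forall k t, g1 k t = g2 k t) -> forall k t, app L g1 k t = app L g2 k t.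
Proof. intros H. induction L as [|y L IH]; intros k t; simpl; auto. rewrite !IH. reflexivity. Qed.

Lemma app_G M L rho : valid rho (M ++ L) -> forall k t, app M (G (M ++ L) rho) k t = G L rho k t.
Proof. revert L. induction M as [|y M IH]; intros L Hv k t; simpl; auto.
  assert (HP : Permutation (y :: M ++ L) (M ++ y :: L)) by apply Permutation_middle.
  assert (Hv2 : valid rho (M ++ y :: L)) by (apply (valid_perm _ _ _ HP); auto).
  assert (E : forall k t, app M (G (y :: M ++ L) rho) k t = G (y :: L) rho k t).
  { intros k' t'. rewrite <- (IH (y :: L) Hv2). apply app_ext. intros; apply G_perm; auto. }
  rewrite !E. apply G_rec. apply (valid_perm _ _ _ (Permutation_sym HP)) in Hv2.
  split. destruct Hv; auto. destruct Hv as [_ Hf]. rewrite Forall_forall in *. intros x Hx.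
  apply Hf. destruct Hx. subst; left; auto. right. apply in_or_app; right; auto.
Qed.

Lemma radius_indep L r1 r2 t : valid r1 L -> valid r2 L -> G L r1 0 t = G L r2 0 t.
Proof. intros H1 H2.
  set (g := fun k t => Cminus (G L r1 k t) (G L r2 k t)).
  assert (Tg : tower g). { intros k s. apply dC_minus; apply G_deriv; auto. }
  assert (Z := uniq L g Tg).
  assert (HL : forall k s, app L (G L r1) k s = G nil r1 k s).
  { intros. pose proof (app_G L nil r1). rewrite app_nil_r in H. apply H; auto. }
  assert (HL2 : forall k s, app L (G L r2) k s = G nil r2 k s).
  { intros. pose proof (app_G L nil r2). rewrite app_nil_r in H. apply H; auto. }
  assert (g 0%nat t = 0%C).
  { apply Z.
    - intros s. unfold g. rewrite app_minus, HL, HL2, !G_nil. apply injective_projections; simpl; ring.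
      destruct H2; auto. destruct H1; auto.
    - intros k Hk. unfold g. rewrite !G_at0 by auto. rewrite !NN_main by (auto; lia).
      apply injective_projections; simpl; ring. }
  unfold g in H.
  transitivity (Cplus (Cminus (G L r1 0 t) (G L r2 0 t)) (G L r2 0 t)). apply injective_projections; simpl; ring.
  rewrite H. apply injective_projections; simpl; ring.
Qed.


Lemma sum_cmod_ge L : 0 <= fold_right (fun y s => Cmod y + s) 0 L.
Proof. induction L; simpl. lra. pose proof (Cmod_ge_0 a). lra. Qed.

Lemma in_cmod_le L y : In y L -> Cmod y <= fold_right (fun y s => Cmod y + s) 0 L.
Proof. induction L; simpl; intros H. contradiction. destruct H. subst. pose proof (sum_cmod_ge L). lra.
  pose proof (Cmod_ge_0 a). specialize (IHL H). lra. Qed.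

Lemma valid_dd L : valid (dd_radius L) L.
Proof. unfold dd_radius. split. pose proof (sum_cmod_ge L). lra.
  rewrite Forall_forall. intros y Hy. pose proof (in_cmod_le L y Hy). lra. Qed.

Lemma expdd_G t L : expdd t L = G L (dd_radius L) 0 t.
Proof. unfold expdd, divdiff, G. cbv zeta. f_equal. apply cRInt_ext. intros th.
  unfold tI, zz, PP. simpl Cpow. rewrite Cmult_1_l. reflexivity. Qed.

Lemma E_indep t L rho : valid rho L -> expdd t L = G L rho 0 t.
Proof. intros H. rewrite expdd_G. apply radius_indep; auto. apply valid_dd. Qed.

Lemma E_nil t : expdd t nil = 0%C.
Proof. rewrite expdd_G. apply G_nil. destruct (valid_dd nil); auto. Qed.

Lemma E_at0 L : expdd 0 L = dl 1 (length L).
Proof. rewrite expdd_G. destruct L as [|y L].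
  - rewrite G_nil. reflexivity. destruct (valid_dd nil); auto.
  - rewrite G_at0 by apply valid_dd. rewrite NN_main by (apply valid_dd || (simpl; lia)). reflexivity. Qed.

Lemma E_perm t L1 L2 : Permutation L1 L2 -> expdd t L1 = expdd t L2.
Proof. intros HP. rewrite (E_indep t L2 (dd_radius L1)). rewrite expdd_G. apply G_perm; auto.
  apply (valid_perm _ L1); auto. apply valid_dd. Qed.

Lemma E_deriv y L t : is_derive (fun s => expdd s (y :: L)) t (Cplus (Cmult y (expdd t (y :: L))) (expdd t L)).
Proof. set (rho := dd_radius (y :: L)). assert (Hv : valid rho (y :: L)) by apply valid_dd.
  apply (is_derive_ext (V:=C_R_NormedModule) (G (y :: L) rho 0)). intros s. symmetry. apply E_indep; auto.
  eapply deqC. apply G_deriv; auto.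
  rewrite (E_indep t (y :: L) rho) by auto. rewrite (E_indep t L rho) by (apply (valid_cons _ y); auto).
  rewrite <- (G_rec y L rho 0 t Hv). apply injective_projections; simpl; ring.
Qed.


Notation csum := (@sum_n_m C_AbelianMonoid).

Lemma csum_Sm (f : nat -> C) n m : (n <= S m)%nat -> csum f n (S m) = Cplus (csum f n m) (f (S m)).
Proof. intros H. apply (sum_n_Sm (G:=C_AbelianMonoid)). auto. Qed.
Lemma csum_Sn (f : nat -> C) n m : (n <= m)%nat -> csum f n m = Cplus (f n) (csum f (S n) m).
Proof. intros H. apply (sum_Sn_m (G:=C_AbelianMonoid)). auto. Qed.
Lemma csum_empty (f : nat -> C) n m : (m < n)%nat -> csum f n m = RtoC 0.
Proof. intros H. apply (sum_n_m_zero (G:=C_AbelianMonoid)). auto. Qed.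
Lemma csum_single (f : nat -> C) n : csum f n n = f n.
Proof. apply (sum_n_n (G:=C_AbelianMonoid)). Qed.
Lemma csum_ext (f g : nat -> C) n m : (forall i, (n <= i <= m)%nat -> f i = g i) -> csum f n m = csum g n m.
Proof. intros H. apply (sum_n_m_ext_loc (G:=C_AbelianMonoid)). auto. Qed.
Lemma csum_plus (f g : nat -> C) n m : csum (fun i => Cplus (f i) (g i)) n m = Cplus (csum f n m) (csum g n m).
Proof. apply (sum_n_m_plus (G:=C_AbelianMonoid)). Qed.
Lemma csum_cmul (c : C) (f : nat -> C) n m : csum (fun i => Cmult c (f i)) n m = Cmult c (csum f n m).
Proof. apply (sum_n_m_mult_l (K:=C_Ring)). Qed.
Lemma csum_mulr (c : C) (f : nat -> C) n m : csum (fun i => Cmult (f i) c) n m = Cmult (csum f n m) c.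
Proof. apply (sum_n_m_mult_r (K:=C_Ring)). Qed.
Lemma csum_zero n m : csum (fun _ => RtoC 0) n m = RtoC 0.
Proof. apply (sum_n_m_const_zero (G:=C_AbelianMonoid)). Qed.
Lemma csum_minus (f g : nat -> C) n m : csum (fun i => Cminus (f i) (g i)) n m = Cminus (csum f n m) (csum g n m).
Proof. destruct (Compare_dec.le_lt_dec n m) as [H|H].
  - induction H. rewrite !csum_single. reflexivity.
    rewrite !csum_Sm by lia. rewrite IHle. apply injective_projections; simpl; ring.
  - rewrite !csum_empty by auto. apply injective_projections; simpl; ring. Qed.

Lemma d_csum (F : nat -> R -> C) (dF : nat -> C) n m (t : R) :
  (forall i, (n <= i <= m)%nat -> is_derive (F i) t (dF i)) ->
  is_derive (fun s => csum (fun i => F i s) n m) t (csum dF n m).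
Proof. intros H. destruct (Compare_dec.le_lt_dec n m) as [Hl|Hl].
  - induction Hl.
    + apply (is_derive_ext (V:=C_R_NormedModule) (F n)). intros s; rewrite csum_single; auto.
      rewrite csum_single. apply H; lia.
    + apply (is_derive_ext (V:=C_R_NormedModule) (fun s => Cplus (csum (fun i => F i s) n m) (F (S m) s))).
      intros s. rewrite csum_Sm by lia. reflexivity.
      rewrite csum_Sm by lia. apply dC_plus. apply IHHl. intros; apply H; lia. apply H; lia.
  - apply (is_derive_ext (V:=C_R_NormedModule) (fun _ => RtoC 0)). intros s; rewrite csum_empty; auto.
    rewrite csum_empty by auto. apply dC_const.
Qed.

Lemma ex_RInt_csum (F : nat -> R -> C) n m a b :
  (forall i, @ex_RInt C_R_NormedModule (F i) a b) ->
  @ex_RInt C_R_NormedModule (fun s => csum (fun i => F i s) n m) a b.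
Proof. intros H. destruct (Compare_dec.le_lt_dec n m) as [Hl|Hl].
  - induction Hl.
    + apply (ex_RInt_ext (V:=C_R_NormedModule) (F n)). intros; rewrite csum_single; auto. apply H.
    + apply (ex_RInt_ext (V:=C_R_NormedModule) (fun s => Cplus (csum (fun i => F i s) n m) (F (S m) s))).
      intros; rewrite csum_Sm by lia; auto. apply (ex_RInt_plus (V:=C_R_NormedModule)); auto.
  - apply (ex_RInt_ext (V:=C_R_NormedModule) (fun _ => RtoC 0)). intros; rewrite csum_empty; auto.
    apply (ex_RInt_const (V:=C_R_NormedModule)).
Qed.

Lemma cRInt_sum (F : nat -> R -> C) n m a b :
  (forall i, @ex_RInt C_R_NormedModule (F i) a b) ->
  cRInt (fun s => csum (fun i => F i s) n m) a b = csum (fun i => cRInt (F i) a b) n m.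
Proof. intros H. destruct (Compare_dec.le_lt_dec n m) as [Hl|Hl].
  - induction Hl.
    + rewrite csum_single. apply cRInt_ext. intros; apply csum_single.
    + rewrite csum_Sm by lia. rewrite <- IHHl. rewrite <- cRInt_plus. apply cRInt_ext. intros; apply csum_Sm; lia.
      apply ex_RInt_csum; auto. apply H.
  - rewrite csum_empty by auto. rewrite (cRInt_ext _ (fun _ => RtoC 0)). rewrite cRInt_const.
    apply injective_projections; simpl; ring. intros; apply csum_empty; auto.
Qed.


Lemma length_xs x r j : length (xs x r j) = (S j - r)%nat.
Proof. unfold xs. rewrite length_map, length_seq. auto. Qed.

Lemma xs_snoc x r j : (r <= S j)%nat -> xs x r (S j) = xs x r j ++ (x (S j) :: nil).
Proof. intros H. unfold xs. replace (S (S j) - r)%nat with (S (S j - r)) by lia.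
  rewrite seq_S, map_app. replace (r + (S j - r))%nat with (S j) by lia. reflexivity. Qed.

Lemma xs_cons x j q : (j <= q)%nat -> xs x j q = x j :: xs x (S j) q.
Proof. intros H. unfold xs. replace (S q - j)%nat with (S (q - j)) by lia. simpl.
  replace (q - j)%nat with (S q - S j)%nat by lia. reflexivity. Qed.

Lemma xs_empty x j : xs x (S j) j = nil.
Proof. unfold xs. replace (S j - S j)%nat with 0%nat by lia. reflexivity. Qed.

Lemma xs_single x r : xs x r r = x r :: nil.
Proof. unfold xs. replace (S r - r)%nat with 1%nat by lia. reflexivity. Qed.

Lemma xs_app x r J q : (r <= S J)%nat -> (J <= q)%nat -> xs x r q = xs x r J ++ xs x (S J) q.
Proof. intros H1 H2. unfold xs. rewrite <- map_app. f_equal.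
  replace (S q - r)%nat with ((S J - r) + (S q - S J))%nat by lia. rewrite seq_app. f_equal. f_equal. lia. Qed.

Lemma dC_aff (F : R -> C) (c d t : R) l : is_derive F (c * t + d) l ->
  is_derive (fun s => F (c * s + d)) t (Cmult (RtoC c) l).
Proof. intros H. assert (Hg : is_derive (fun s : R => c * s + d) t c) by (auto_derive; auto; ring).
  pose proof (is_derive_comp (K:=R_AbsRing) (V:=C_R_NormedModule) F (fun s => c * s + d) t l c H Hg) as D.
  eapply deqC. exact D. rewrite scal_R_Cmult. reflexivity. Qed.

Lemma E_deriv_gen L t : exists l, is_derive (fun s => expdd s L) t l.
Proof. destruct L as [|y L]. exists (RtoC 0). apply (is_derive_ext (V:=C_R_NormedModule) (fun _ => RtoC 0)).
  intros; rewrite E_nil; auto. apply dC_const. eexists. apply E_deriv. Qed.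

Lemma E_CDer c d L : CDer (fun s => expdd (c * s + d) L).
Proof. intros t. destruct (E_deriv_gen L (c * t + d)) as [l Hl]. eexists. apply (dC_aff (fun s => expdd s L)). exact Hl. Qed.

Lemma E_snoc_deriv x r j t : (r <= S j)%nat ->
  is_derive (fun s => expdd s (xs x r (S j))) t (Cplus (Cmult (x (S j)) (expdd t (xs x r (S j)))) (expdd t (xs x r j))).
Proof. intros H.
  assert (HP : Permutation (xs x r (S j)) (x (S j) :: xs x r j)).
  { rewrite xs_snoc by auto. apply Permutation_sym. apply Permutation_cons_append. }
  apply (is_derive_ext (V:=C_R_NormedModule) (fun s => expdd s (x (S j) :: xs x r j))).
  intros s. symmetry. apply E_perm; auto.
  rewrite (E_perm t _ _ HP). apply E_deriv. Qed.

Lemma E_single_deriv y t : is_derive (fun s => expdd s (y :: nil)) t (Cmult y (expdd t (y :: nil))).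
Proof. eapply deqC. apply E_deriv. rewrite E_nil. apply injective_projections; simpl; ring. Qed.

Lemma E_at0_xs x i j : expdd 0 (xs x i j) = if Nat.eqb i j then RtoC 1 else RtoC 0.
Proof. rewrite E_at0, length_xs. unfold dl. destruct (Nat.eqb_spec i j); destruct (Nat.eqb_spec 1 (S j - i)); auto; lia. Qed.


Lemma E_shift_deriv L s t l : is_derive (fun u => expdd u L) (s + t) l -> is_derive (fun u => expdd (s + u) L) t l.
Proof. intros H. apply (is_derive_ext (V:=C_R_NormedModule) (fun u => expdd (1 * u + s) L)).
  intros; f_equal; ring. eapply deqC. apply (dC_aff (fun u => expdd u L)).
  replace (1 * t + s) with (s + t) by ring. exact H. apply injective_projections; simpl; ring. Qed.

Lemma csum_last_delta (a : nat -> C) r j :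
  (r <= j)%nat -> csum (fun i => Cmult (a i) (if Nat.eqb i j then RtoC 1 else RtoC 0)) r j = a j.
Proof. intros H. destruct j as [|j'].
  - assert (r = 0%nat) by lia. subst. rewrite csum_single. simpl. apply injective_projections; simpl; ring.
  - destruct (Nat.eq_dec r (S j')) as [E|E].
    + subst. rewrite csum_single. rewrite Nat.eqb_refl. apply injective_projections; simpl; ring.
    + rewrite csum_Sm by lia. rewrite Nat.eqb_refl.
      rewrite (csum_ext _ (fun _ => RtoC 0)). rewrite csum_zero. apply injective_projections; simpl; ring.
      intros i Hi. destruct (Nat.eqb_spec i (S j')). lia. apply injective_projections; simpl; ring.
Qed.

Lemma add_formula x r : forall d s t,
  expdd (s + t) (xs x r (r + d)) = csum (fun i => Cmult (expdd s (xs x r i)) (expdd t (xs x i (r + d)))) r (r + d).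
Proof. induction d as [|d IH]; intros s.
  - rewrite Nat.add_0_r.
    set (u := fun t => Cminus (expdd (s + t) (xs x r r)) (csum (fun i => Cmult (expdd s (xs x r i)) (expdd t (xs x i r))) r r)).
    assert (Hu : forall t, u t = 0%C).
    { apply first_order with (y := x r).
      - intros t. unfold u. rewrite !csum_single, !xs_single.
        apply (is_derive_ext (V:=C_R_NormedModule) (fun t => Cminus (expdd (s + t) (x r :: nil)) (Cmult (expdd s (x r :: nil)) (expdd t (x r :: nil))))).
        intros; rewrite csum_single, xs_single; reflexivity.
        eapply deqC. apply dC_minus. apply E_shift_deriv. apply E_single_deriv.
        apply dC_cmul. apply E_single_deriv. apply injective_projections; simpl; ring.
      - unfold u. rewrite csum_single, Rplus_0_r, E_at0_xs, Nat.eqb_refl. apply injective_projections; simpl; ring. }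
    intros t. specialize (Hu t). unfold u in Hu.
    transitivity (Cplus (Cminus (expdd (s + t) (xs x r r)) (csum (fun i => Cmult (expdd s (xs x r i)) (expdd t (xs x i r))) r r)) (csum (fun i => Cmult (expdd s (xs x r i)) (expdd t (xs x i r))) r r)).
    apply injective_projections; simpl; ring. rewrite Hu. apply injective_projections; simpl; ring.
  - set (j := (r + S d)%nat). set (j' := (r + d)%nat).
    assert (Ej : j = S j') by (unfold j, j'; lia).
    set (R' := fun t => csum (fun i => Cmult (expdd s (xs x r i)) (expdd t (xs x i j))) r j).
    set (u := fun t => Cminus (expdd (s + t) (xs x r j)) (R' t)).
    assert (Hu : forall t, u t = 0%C).
    { apply first_order with (y := x j).
      - intros t. unfold u, R'.
        eapply deqC. apply dC_minus. apply E_shift_deriv. rewrite Ej. apply E_snoc_deriv. lia.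
        apply d_csum. intros i Hi. apply dC_cmul. rewrite Ej. apply E_snoc_deriv. lia.
        rewrite <- Ej.
        rewrite (csum_ext _ (fun i => Cplus (Cmult (x j) (Cmult (expdd s (xs x r i)) (expdd t (xs x i j))))
                                           (Cmult (expdd s (xs x r i)) (expdd t (xs x i j'))))).
        2: { intros i Hi. apply injective_projections; simpl; ring. }
        rewrite csum_plus, csum_cmul.
        assert (Hs : csum (fun i => Cmult (expdd s (xs x r i)) (expdd t (xs x i j'))) r j = csum (fun i => Cmult (expdd s (xs x r i)) (expdd t (xs x i j'))) r j').
        { rewrite Ej. rewrite csum_Sm by lia. rewrite xs_empty, E_nil. apply injective_projections; simpl; ring. }
        rewrite Hs. specialize (IH s t). fold j' in IH. rewrite <- IH.
        apply injective_projections; simpl; ring.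
      - unfold u, R'. rewrite Rplus_0_r.
        rewrite (csum_ext _ (fun i => Cmult (expdd s (xs x r i)) (if Nat.eqb i j then RtoC 1 else RtoC 0))).
        rewrite csum_last_delta by lia. apply injective_projections; simpl; ring.
        intros i Hi. rewrite E_at0_xs. reflexivity. }
    intros t. specialize (Hu t). unfold u in Hu.
    transitivity (Cplus (Cminus (expdd (s + t) (xs x r j)) (R' t)) (R' t)).
    apply injective_projections; simpl; ring. rewrite Hu. unfold R'. apply injective_projections; simpl; ring.
Qed.


Lemma add_formula' x r j s t : (r <= j)%nat ->
  expdd (s + t) (xs x r j) = csum (fun i => Cmult (expdd s (xs x r i)) (expdd t (xs x i j))) r j.
Proof. intros H. replace j with (r + (j - r))%nat by lia. apply add_formula. Qed.

Lemma zero_eq (a b : C) : Cminus a b = 0%C -> a = b.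
Proof. intros H. transitivity (Cplus (Cminus a b) b). apply injective_projections; simpl; ring.
  rewrite H. apply injective_projections; simpl; ring. Qed.

Lemma tau_id x q : forall d j, (S q - j = d)%nat -> (j <= S q)%nat -> forall t,
  csum (fun m => expdd t (xs x j q ++ x m :: nil)) j q = Cmult (RtoC t) (expdd t (xs x j q)).
Proof. induction d as [|d IH]; intros j Hd Hj t.
  - assert (j = S q) by lia. subst. rewrite csum_empty by lia. rewrite xs_empty, E_nil.
    apply injective_projections; simpl; ring.
  - assert (Hjq : (j <= q)%nat) by lia.
    set (B' := xs x (S j) q).
    assert (HB : xs x j q = x j :: B') by (apply xs_cons; auto).
    set (u := fun t => Cminus (csum (fun m => expdd t (xs x j q ++ x m :: nil)) j q) (Cmult (RtoC t) (expdd t (xs x j q)))).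
    assert (Hu : forall t, u t = 0%C).
    { apply first_order with (y := x j).
      - intros s. unfold u. rewrite HB.
        eapply deqC. apply dC_minus. apply d_csum. intros m Hm. simpl. apply E_deriv.
        apply dC_mult. apply dC_id. apply E_deriv.
        rewrite (csum_ext _ (fun m => Cplus (Cmult (x j) (expdd s ((x j :: B') ++ x m :: nil))) (expdd s (B' ++ x m :: nil)))).
        2: { intros; reflexivity. }
        rewrite csum_plus, csum_cmul. rewrite (csum_Sn (fun m => expdd s (B' ++ x m :: nil))) by auto.
        assert (E1 : expdd s (B' ++ x j :: nil) = expdd s (x j :: B')).
        { apply E_perm. apply Permutation_sym, Permutation_cons_append. }
        rewrite E1. unfold B'. rewrite (IH (S j)) by lia. fold B'.
        apply injective_projections; simpl; ring.
      - unfold u. rewrite (csum_ext _ (fun _ => RtoC 0)). rewrite csum_zero.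
        apply injective_projections; simpl; ring.
        intros m Hm. rewrite E_at0. unfold dl. rewrite length_app, length_xs. replace (length (x m :: nil)) with 1%nat by reflexivity.
        destruct (Nat.eqb_spec 1 (S q - j + 1)). lia. reflexivity. }
    apply zero_eq. apply Hu.
Qed.


Lemma dEneg L a l : is_derive (fun s => expdd s L) (- a) l -> is_derive (fun s => expdd (- s) L) a (Cmult (RtoC (-1)) l).
Proof. intros H. apply (is_derive_ext (V:=C_R_NormedModule) (fun s => expdd (-1 * s + 0) L)).
  intros; f_equal; ring. apply (dC_aff (fun s => expdd s L)). replace (-1 * a + 0) with (- a) by ring. exact H. Qed.

Section K.
Variable x : nat -> C.
Variables J q : nat.
Hypothesis HJq : (J <= q)%nat.

Definition Bl := xs x J q.
Definition ff (t : R) : C := Cmult (RtoC t) (expdd (- t) Bl).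
Definition II (r i : nat) (a : R) : C := cRInt (fun t => Cmult (ff t) (expdd t (xs x r i))) 0 a.
Definition KK (r j : nat) (a : R) : C := csum (fun i => Cmult (expdd (- a) (xs x i j)) (II r i a)) r j.
Definition PH (r j : nat) (a : R) : C := csum (fun m => expdd (- a) (xs x r j ++ Bl ++ x m :: nil)) J q.

Lemma ff_CDer : CDer ff.
Proof. unfold ff. apply CDer_mult. apply CDer_RtoC_id.
  apply (CDer_ext (fun s => expdd (-1 * s + 0) Bl)). intros; f_equal; ring. apply E_CDer. Qed.

Lemma II_deriv r i a : is_derive (II r i) a (Cmult (ff a) (expdd a (xs x r i))).
Proof. unfold II, cRInt.
  assert (D : CDer (fun t => Cmult (ff t) (expdd t (xs x r i)))).
  { apply CDer_mult. apply ff_CDer. apply (CDer_ext (fun s => expdd (1 * s + 0) (xs x r i))). intros; f_equal; ring. apply E_CDer. }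
  apply (is_derive_RInt (V:=C_R_CompleteNormedModule) (fun t => Cmult (ff t) (expdd t (xs x r i))) _ 0).
  - apply filter_forall. intros b. apply (RInt_correct (V:=C_R_CompleteNormedModule)). apply CDer_exRInt; auto.
  - apply CDer_cont; auto.
Qed.

Lemma II_0 r i : II r i 0 = 0%C.
Proof. unfold II, cRInt. apply (RInt_point (V:=C_R_CompleteNormedModule)). Qed.

Lemma E_inv_prod r j a : (r <= j)%nat ->
  csum (fun i => Cmult (expdd a (xs x r i)) (expdd (- a) (xs x i j))) r j = if Nat.eqb r j then RtoC 1 else RtoC 0.
Proof. intros H. rewrite <- add_formula' by auto. replace (a + - a) with 0 by ring. apply E_at0_xs. Qed.

Lemma KK_deriv_step r j' a : (r <= j')%nat ->
  is_derive (KK r (S j')) a (Cminus (Cmult (Copp (x (S j'))) (KK r (S j') a)) (KK r j' a)).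
Proof. intros H. unfold KK at 1. eapply deqC. apply d_csum. intros i Hi. apply dC_mult.
  apply dEneg. apply E_snoc_deriv. lia. apply II_deriv.
  rewrite (csum_ext _ (fun i => Cplus (Cmult (Copp (x (S j'))) (Cmult (expdd (- a) (xs x i (S j'))) (II r i a)))
     (Cplus (Cmult (RtoC (-1)) (Cmult (expdd (- a) (xs x i j')) (II r i a)))
            (Cmult (ff a) (Cmult (expdd a (xs x r i)) (expdd (- a) (xs x i (S j')))))))).
  2: { intros i Hi. apply injective_projections; simpl; ring. }
  rewrite !csum_plus, !csum_cmul. rewrite E_inv_prod by lia.
  destruct (Nat.eqb_spec r (S j')). lia.
  rewrite (csum_Sm (fun i => Cmult (expdd (- a) (xs x i j')) (II r i a))) by lia.
  rewrite xs_empty, E_nil. unfold KK. apply injective_projections; simpl; ring.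
Qed.

Lemma KK_deriv_base r a : is_derive (KK r r) a (Cplus (Cmult (Copp (x r)) (KK r r a)) (ff a)).
Proof. unfold KK at 1. eapply deqC. apply d_csum. intros i Hi. apply dC_mult.
  apply dEneg. assert (i = r) by lia. subst. rewrite xs_single. apply E_single_deriv. apply II_deriv.
  rewrite !csum_single. pose proof (E_inv_prod r r a (le_n r)) as E. rewrite csum_single, Nat.eqb_refl in E.
  unfold KK. rewrite csum_single. rewrite !xs_single in *.
  transitivity (Cplus (Cmult (Copp (x r)) (Cmult (expdd (- a) (x r :: nil)) (II r r a)))
                      (Cmult (ff a) (Cmult (expdd a (x r :: nil)) (expdd (- a) (x r :: nil))))).
  apply injective_projections; simpl; ring. rewrite E. apply injective_projections; simpl; ring.
Qed.

Lemma PH_deriv_step r j' a : (r <= j')%nat ->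
  is_derive (PH r (S j')) a (Cminus (Cmult (Copp (x (S j'))) (PH r (S j') a)) (PH r j' a)).
Proof. intros H. unfold PH.
  apply (is_derive_ext (V:=C_R_NormedModule) (fun a => csum (fun m => expdd (- a) (x (S j') :: (xs x r j' ++ Bl ++ x m :: nil))) J q)).
  { intros s. apply csum_ext. intros m Hm. apply E_perm. rewrite xs_snoc by lia. rewrite <- app_assoc. simpl.
    apply Permutation_middle. }
  eapply deqC. apply d_csum. intros m Hm. apply dEneg. apply E_deriv.
  rewrite (csum_ext _ (fun m => Cplus (Cmult (Copp (x (S j'))) (expdd (- a) (x (S j') :: (xs x r j' ++ Bl ++ x m :: nil))))
                                      (Cmult (RtoC (-1)) (expdd (- a) (xs x r j' ++ Bl ++ x m :: nil))))).
  2: { intros; apply injective_projections; simpl; ring. }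
  rewrite csum_plus, !csum_cmul.
  rewrite (csum_ext (fun m => expdd (- a) (x (S j') :: (xs x r j' ++ Bl ++ x m :: nil))) (fun m => expdd (- a) (xs x r (S j') ++ Bl ++ x m :: nil))).
  apply injective_projections; simpl; ring.
  intros m Hm. apply E_perm. rewrite xs_snoc by lia. rewrite <- app_assoc. simpl. apply Permutation_middle.
Qed.

Lemma PH_deriv_base r a : is_derive (PH r r) a (Cplus (Cmult (Copp (x r)) (PH r r a)) (ff a)).
Proof. unfold PH. rewrite xs_single. simpl.
  eapply deqC. apply d_csum. intros m Hm. apply dEneg. apply E_deriv.
  rewrite (csum_ext _ (fun m => Cplus (Cmult (Copp (x r)) (expdd (- a) (x r :: Bl ++ x m :: nil)))
                                      (Cmult (RtoC (-1)) (expdd (- a) (Bl ++ x m :: nil))))).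
  2: { intros; apply injective_projections; simpl; ring. }
  rewrite csum_plus, !csum_cmul. unfold Bl. rewrite (tau_id x q (S q - J) J) by lia. unfold ff, Bl.
  apply injective_projections; simpl; ring.
Qed.

Lemma KK_0 r j : KK r j 0 = 0%C.
Proof. unfold KK. rewrite (csum_ext _ (fun _ => RtoC 0)). apply csum_zero.
  intros i Hi. rewrite II_0. apply Cmult_0_r. Qed.

Lemma PH_0 r j : (r <= j)%nat -> PH r j 0 = 0%C.
Proof. intros H. unfold PH. rewrite (csum_ext _ (fun _ => RtoC 0)). apply csum_zero.
  intros m Hm. rewrite Ropp_0, E_at0. unfold dl, Bl. rewrite !length_app, !length_xs.
  replace (length (x m :: nil)) with 1%nat by reflexivity.
  destruct (Nat.eqb_spec 1 (S j - r + (S q - J + 1))). lia. reflexivity. Qed.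

Lemma KK_PH : forall d r a, KK r (r + d) a = PH r (r + d) a.
Proof. induction d as [|d IH]; intros r.
  - rewrite Nat.add_0_r. intros a. apply zero_eq. revert a.
    apply first_order with (y := Copp (x r)).
    + intros a. eapply deqC. apply dC_minus. apply KK_deriv_base. apply PH_deriv_base.
      apply injective_projections; simpl; ring.
    + rewrite KK_0, PH_0 by lia. apply injective_projections; simpl; ring.
  - replace (r + S d)%nat with (S (r + d)) by lia. intros a. apply zero_eq. revert a.
    apply first_order with (y := Copp (x (S (r + d)))).
    + intros a. eapply deqC. apply dC_minus. apply KK_deriv_step. lia. apply PH_deriv_step. lia.
      rewrite (IH r a). apply injective_projections; simpl; ring.
    + rewrite KK_0, PH_0 by lia. apply injective_projections; simpl; ring.
Qed.

End K.


Lemma CDer_csum (F : nat -> R -> C) n m : (forall i, CDer (F i)) -> CDer (fun t => csum (fun i => F i t) n m).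
Proof. intros H. destruct (Compare_dec.le_lt_dec n m) as [Hl|Hl].
  - induction Hl.
    + apply (CDer_ext (F n)). intros; rewrite csum_single; auto. apply H.
    + apply (CDer_ext (fun s => Cplus (csum (fun i => F i s) n m) (F (S m) s))).
      intros; rewrite csum_Sm by lia; auto. apply CDer_plus; auto.
  - apply (CDer_ext (fun _ => RtoC 0)). intros; rewrite csum_empty; auto. apply CDer_const.
Qed.

Lemma E_CDer1 L : CDer (fun s => expdd s L).
Proof. apply (CDer_ext (fun s => expdd (1 * s + 0) L)). intros; f_equal; ring. apply E_CDer. Qed.

Theorem corollary2 (x : nat -> C) (q j : nat) (beta : R) :
  (j <= q)%nat -> 0 < beta ->
  cRInt (fun tau => Cmult (RtoC tau)
           (Cmult (expdd (- tau) (xs x j q)) (expdd (- (beta - tau)) (xs x 0 j))))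
        0 (beta / 2)
  = sum_n_m (fun r : nat =>
      Cmult (expdd (- (beta / 2)) (xs x 0 r))
            (sum_n_m (fun m : nat =>
               expdd (- (beta / 2)) (xs x r q ++ x j :: x m :: nil)) j q)) 0 j.
Proof.
  intros Hjq Hb. set (a := beta / 2).
  set (T := fun r tau => Cmult (expdd (- a) (xs x 0 r))
              (csum (fun i => Cmult (expdd (- a) (xs x i j)) (Cmult (ff x j q tau) (expdd tau (xs x r i)))) r j)).
  rewrite (cRInt_ext _ (fun tau => csum (fun r => T r tau) 0 j)).
  2: { intros tau. unfold T.
       replace (- (beta - tau)) with (- a + (tau - a)) by (unfold a; field).
       rewrite add_formula' by lia.
       rewrite <- csum_cmul. rewrite <- csum_cmul. apply csum_ext. intros r Hr.
       replace (tau - a) with (tau + - a) by ring. rewrite add_formula' by lia.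
       set (SS := csum (fun i => Cmult (expdd tau (xs x r i)) (expdd (- a) (xs x i j))) r j).
       transitivity (Cmult (expdd (- a) (xs x 0 r)) (Cmult (Cmult (RtoC tau) (expdd (- tau) (xs x j q))) SS)).
       apply injective_projections; simpl; ring. f_equal. unfold SS. rewrite <- csum_cmul. apply csum_ext. intros i Hi.
       unfold ff, Bl. apply injective_projections; simpl; ring. }
  rewrite cRInt_sum.
  2: { intros r. apply CDer_exRInt. unfold T. apply CDer_mult. apply CDer_const. apply CDer_csum. intros i.
       apply CDer_mult. apply CDer_const. apply CDer_mult. apply ff_CDer. apply E_CDer1. }
  apply csum_ext. intros r Hr. unfold T.
  rewrite cRInt_cmul.
  2: { apply CDer_exRInt. apply CDer_csum. intros i. apply CDer_mult. apply CDer_const. apply CDer_mult. apply ff_CDer. apply E_CDer1. }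
  f_equal.
  rewrite cRInt_sum.
  2: { intros i. apply CDer_exRInt. apply CDer_mult. apply CDer_const. apply CDer_mult. apply ff_CDer. apply E_CDer1. }
  transitivity (KK x j q r j a).
  { unfold KK. apply csum_ext. intros i Hi. rewrite cRInt_cmul. reflexivity.
    apply CDer_exRInt. apply CDer_mult. apply ff_CDer. apply E_CDer1. }
  replace j with (r + (j - r))%nat at 2 3 by lia. rewrite KK_PH by auto. replace (r + (j - r))%nat with j by lia.
  unfold PH. apply csum_ext. intros m Hm. apply E_perm. unfold Bl.
  rewrite (xs_cons x j q) by auto. rewrite (xs_app x r j q) by lia. rewrite <- !app_assoc.
  apply Permutation_app_head. simpl. apply Permutation_middle.
Qed.
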